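(* If $(U,\le)$ is an ordered supertropical monoid ($\mathrm{OST}$-monoid), then $U$ is a semiring.
   Context: A supertropical monoid is a commutative monoid $(U,\cdot)$ with absorbing element $0$ and distinguished idempotent $e$ with $ex=0\Rightarrow x=0$, together with a total ordering $\le_M$ on $M:=eU$, compatible with multiplication and with $0$ least, making $M$ a bipotent semiring (addition $=\max$). Define on $U$: $x+y:=y$ if $ex<ey$, $x$ if $ex>ey$, $ex$ if $ex=ey$; $U$ is a semiring if this addition is associative and distributive. An OST-monoid is a supertropical monoid $U$ with a total ordering $\le$ on the set $U$ such that: (OST1) $x\le y\Rightarrow xz\le yz$; (OST2) for $x,y\in M$, $x\le y\Leftrightarrow x\le_M y$; (OST3) $0\le1\le e$. *)

(* Defs.v *)
From Stdlib Require Import ClassicalEpsilon.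

Section Supertropical.
Variables (U : Type) (mul : U -> U -> U) (one zero e : U).

(* M := eU ; since e is idempotent, x \in eU iff e x = x *)
Definition inM (x : U) : Prop := exists y, x = mul e y.

Definition total_order_on (P : U -> Prop) (le : U -> U -> Prop) : Prop :=
  (forall x, P x -> le x x) /\
  (forall x y, P x -> P y -> le x y -> le y x -> x = y) /\
  (forall x y z, P x -> P y -> P z -> le x y -> le y z -> le x z) /\
  (forall x y, P x -> P y -> le x y \/ le y x).

Definition is_supertropical_monoid (leM : U -> U -> Prop) : Prop :=
  (forall x y z, mul (mul x y) z = mul x (mul y z)) /\
  (forall x y, mul x y = mul y x) /\
  (forall x, mul one x = x) /\
  (forall x, mul zero x = zero) /\
  mul e e = e /\
  (forall x, mul e x = zero -> x = zero) /\
  total_order_on inM leM /\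
  (forall x y z, inM x -> inM y -> inM z -> leM x y -> leM (mul x z) (mul y z)) /\
  (forall x, inM x -> leM zero x).

Definition ltM (leM : U -> U -> Prop) (x y : U) : Prop := leM x y /\ x <> y.

Definition st_add (leM : U -> U -> Prop) (x y : U) : U :=
  if excluded_middle_informative (ltM leM (mul e x) (mul e y)) then y
  else if excluded_middle_informative (ltM leM (mul e y) (mul e x)) then x
  else mul e x.

Definition is_OST_monoid (leM le : U -> U -> Prop) : Prop :=
  is_supertropical_monoid leM /\
  total_order_on (fun _ => True) le /\
  (forall x y z, le x y -> le (mul x z) (mul y z)) /\
  (forall x y, inM x -> inM y -> (le x y <-> leM x y)) /\
  le zero one /\ le one e.

Definition st_is_semiring (leM : U -> U -> Prop) : Prop :=
  (forall x y z, st_add leM (st_add leM x y) z = st_add leM x (st_add leM y z)) /\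
  (forall x y z, mul x (st_add leM y z) = st_add leM (mul x y) (mul x z)) /\
  (forall x y z, mul (st_add leM x y) z = st_add leM (mul x z) (mul y z)).

End Supertropical.

(* Main.v *)
Require Import Defs.
From Stdlib Require Import Classical ClassicalEpsilon.

Theorem theorem61p4 (U : Type) (mul : U -> U -> U) (one zero e : U)
  (leM le : U -> U -> Prop) :
  @is_OST_monoid U mul one zero e leM le ->
  @st_is_semiring U mul e leM.
Proof.
  intros [[mA [mC [m1 [m0 [ee [enz [[r [asy [tr to]]] [comp z0]]]]]]]]
          [[lr [las [ltr lto]]] [o1 [o2 [o3 o4]]]]].
  assert (inE : forall x, inM U mul e (mul e x)) by (intro x; exists x; reflexivity).
  assert (EE : forall x, mul e (mul e x) = mul e x) by (intro x; rewrite <- mA, ee; reflexivity).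
  assert (Exy : forall x y, mul e (mul x y) = mul x (mul e y))
    by (intros x y; rewrite <- mA, (mC e x), mA; reflexivity).
  assert (tri : forall a b, inM U mul e a -> inM U mul e b ->
             ltM U leM a b \/ ltM U leM b a \/ a = b).
  { intros a b Ha Hb. destruct (classic (a = b)) as [h|h]; [now right; right|].
    destruct (to a b Ha Hb); [left|right;left]; split; auto. }
  assert (ltirr : forall a, ~ ltM U leM a a) by (intros a [_ h]; auto).
  assert (ltasym : forall a b, inM U mul e a -> inM U mul e b -> ltM U leM a b -> ltM U leM b a -> False).
  { intros a b Ha Hb [h1 h2] [h3 h4]. apply h2. apply asy; auto. }
  assert (lttr : forall a b c, inM U mul e a -> inM U mul e b -> inM U mul e c ->
            ltM U leM a b -> ltM U leM b c -> ltM U leM a c).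
  { intros a b c Ha Hb Hc [h1 h2] [h3 h4]. split. eapply tr; eauto.
    intro hac; subst c. apply h2. apply asy; auto. }
  assert (addlt : forall x y, ltM U leM (mul e x) (mul e y) -> st_add U mul e leM x y = y).
  { intros x y h. unfold st_add. destruct (excluded_middle_informative _); tauto. }
  assert (addgt : forall x y, ltM U leM (mul e y) (mul e x) -> st_add U mul e leM x y = x).
  { intros x y h. unfold st_add. destruct (excluded_middle_informative _) as [h'|h'].
    - exfalso; eapply ltasym; [| |exact h|exact h']; apply inE.
    - destruct (excluded_middle_informative _); tauto. }
  assert (addeq : forall x y, mul e x = mul e y -> st_add U mul e leM x y = mul e x).
  { intros x y h. unfold st_add. rewrite h.
    destruct (excluded_middle_informative _) as [h'|h']; [exfalso; eapply ltirr; eauto|].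
    reflexivity. }
  assert (addC : forall x y, st_add U mul e leM x y = st_add U mul e leM y x).
  { intros x y. destruct (tri (mul e x) (mul e y) (inE _) (inE _)) as [h|[h|h]].
    - rewrite (addlt _ _ h), (addgt _ _ h); auto.
    - rewrite (addgt _ _ h), (addlt _ _ h); auto.
    - rewrite (addeq _ _ h), (addeq _ _ (eq_sym h)); auto. }
  assert (leE : forall x, le x (mul e x)).
  { intro x. pose proof (o1 _ _ x o4) as h. rewrite m1 in h. exact h. }
  assert (dlt : forall x y z, ltM U leM (mul e y) (mul e z) ->
     mul x (st_add U mul e leM y z) = st_add U mul e leM (mul x y) (mul x z)).
  { intros x y z h. rewrite (addlt _ _ h).
    assert (hle : leM (mul e (mul x y)) (mul e (mul x z))).
    { apply (proj1 (o2 _ _ (inE _) (inE _))). rewrite !Exy, (mC x (mul e y)), (mC x (mul e z)).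
      apply o1. apply (proj2 (o2 _ _ (inE _) (inE _))). destruct h; auto. }
    destruct (tri (mul e (mul x y)) (mul e (mul x z)) (inE _) (inE _)) as [h'|[h'|h']].
    - rewrite (addlt _ _ h'); auto.
    - exfalso. destruct h' as [h1 h2]. apply h2. apply asy; auto.
    - rewrite (addeq _ _ h'), h'.
      assert (hz : le (mul e y) z).
      { destruct (lto (mul e y) z I I) as [hh|hh]; auto. exfalso.
        pose proof (o1 _ _ e hh) as h3. rewrite (mC z e), (mC (mul e y) e), EE in h3.
        apply (proj1 (o2 _ _ (inE _) (inE _))) in h3.
        destruct h as [h4 h5]. apply h5. apply asy; auto. }
      pose proof (o1 _ _ x hz) as h3.
      rewrite (mC (mul e y) x), <- Exy, h', (mC z x) in h3.
      apply las; auto. }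
  split; [|split].
  - intros x y z.
    destruct (tri (mul e x) (mul e y) (inE _) (inE _)) as [h|[h|h]];
    destruct (tri (mul e y) (mul e z) (inE _) (inE _)) as [k|[k|k]].
    + rewrite (addlt _ _ h), (addlt _ _ k). rewrite addlt; auto.
      eapply lttr; eauto.
    + rewrite (addlt _ _ h), (addgt _ _ k), (addlt _ _ h); auto.
    + rewrite (addlt _ _ h), (addeq _ _ k), addlt; auto. rewrite EE; auto.
    + rewrite (addgt _ _ h), (addlt _ _ k).
      destruct (tri (mul e x) (mul e z) (inE _) (inE _)) as [l|[l|l]].
      * rewrite (addlt _ _ l); auto.
      * rewrite (addgt _ _ l); auto.
      * rewrite (addeq _ _ l); auto.
    + rewrite (addgt _ _ h), (addgt _ _ k), (addgt _ _ h).
      rewrite addgt; auto. eapply lttr; eauto.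
    + rewrite (addgt _ _ h), (addeq _ _ k), (addgt x (mul e y)); [|rewrite EE; auto].
      rewrite addgt; auto. rewrite <- k; auto.
    + rewrite (addeq _ _ h).
      rewrite (addlt _ _ k), addlt; [|rewrite EE, h; auto].
      rewrite addlt; auto. rewrite h; auto.
    + rewrite (addeq _ _ h), (addgt _ _ k), addgt; [|rewrite EE, h; auto].
      rewrite addeq; auto.
    + rewrite (addeq _ _ h), (addeq _ _ k), addeq; [|rewrite EE, h, k; auto].
      rewrite addeq; rewrite ?EE; congruence.
  - intros x y z.
    destruct (tri (mul e y) (mul e z) (inE _) (inE _)) as [h|[h|h]].
    + apply dlt; auto.
    + rewrite addC, (addC (mul x y)). apply dlt; auto.
    + rewrite (addeq _ _ h), addeq; [|rewrite !Exy, h; auto].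
      rewrite Exy; auto.
  - intros x y z.
    destruct (tri (mul e x) (mul e y) (inE _) (inE _)) as [h|[h|h]].
    + rewrite (mC _ z), (mC x z), (mC y z). apply dlt; auto.
    + rewrite (mC _ z), (mC x z), (mC y z), addC, (addC (mul z x)). apply dlt; auto.
    + rewrite (addeq _ _ h), addeq; [|rewrite (mC x z), (mC y z), !Exy, h; auto].
      rewrite (mC x z), Exy, mC; auto.
Qed.
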